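(* Let $d\ge3$, $\Omega=\{1,\ldots,d\}$, and $F\le F'\le\mathrm{Sym}(\Omega)$ with $F'$ preserving the orbits of $F$, $F$ nontrivial and $F'$ 2-transitive on $\Omega$. Let $G^+\le G(F,F')$ be the subgroup of elements $g$ such that $d(v,gv)$ is even for some (equivalently every) vertex $v$ of $T$. Then there exists a geodesic line $L$ in $T$ whose set-wise stabilizer in $G^+$ contains an element translating $L$ by distance $2$ and an element fixing a vertex $v_0\in L$ and reversing the orientation of $L$; consequently the set-wise stabilizer of $L$ in $G^+$ acts transitively on the geometric edges of $L$.
   Context: Let $T=\mathcal{T}_d$ be the $d$-regular tree with a fixed edge coloring $c\colon E(T)\to\Omega$ whose restriction $c_v$ to the edges $E(v)$ at each vertex $v$ is a bijection onto $\Omega$. For $g\in\mathrm{Aut}(T)$, $\sigma(g,v)=c_{gv}\circ g_v\circ c_v^{-1}$ with $g_v\colon E(v)\to E(gv)$ induced by $g$. $U(F')=\{g:\sigma(g,v)\in F'\ \forall v\}$, $G(F)=\{g:\sigma(g,v)\in F$ for all but finitely many $v\}$, $G(F,F')=G(F)\cap U(F')$. A geometric edge of $L$ is an unordered pair of adjacent vertices of $L$. *)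

(* Defs.v *)
From HB Require Import structures.
From mathcomp Require Import all_boot all_order all_algebra all_fingroup.
Set Implicit Arguments. Unset Strict Implicit. Unset Printing Implicit Defensive.
Import GRing.Theory Num.Theory.

(* Model of the d-regular tree T_d with its legal edge colouring, Omega = 'I_d.
   Vertices are reduced words over 'I_d (no two consecutive letters equal),
   stored most-recent-letter first.  The neighbour of w along the edge of colour c
   is [step w c]: cancel c if w starts with c, otherwise prepend c.
   Every edge {w, step w c} has colour c; at each vertex the colouring is a
   bijection onto 'I_d.  (Any two legal colourings of T_d are isomorphic.) *)

Definition reduced d (w : seq 'I_d) := sorted (fun a b => a != b) w.

Definition stepw d (w : seq 'I_d) (c : 'I_d) : seq 'I_d :=
  if w is a :: w' then (if a == c then w' else c :: w) else [:: c].

Lemma stepw_reduced d (w : seq 'I_d) c : reduced w -> reduced (stepw w c).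
Proof.
rewrite /reduced /stepw; case: w => [|a w'] //= H.
case: eqP => [_|ne]; first exact: (path_sorted H).
by rewrite /= H andbT; apply/eqP => E; apply: ne; rewrite E.
Qed.

Record vert d := Vert { word : seq 'I_d; _ : reduced word }.
HB.instance Definition _ d := [isSub for (@word d)].
HB.instance Definition _ d := [Equality of vert d by <:].

Definition step d (v : vert d) (c : 'I_d) : vert d :=
  @Vert d (stepw (word v) c) (stepw_reduced c (valP v)).

Definition adj d (u v : vert d) : Prop := exists c : 'I_d, v = step u c.

Definition is_aut d (g : vert d -> vert d) : Prop :=
  bijective g /\ forall u v, adj u v <-> adj (g u) (g v).

(* "sigma(g, v) = p" unfolded: g maps the edge of colour c at v onto the edge of
   colour p c at g v, for every colour c.  Hence sigma(g,v) \in F  <->  loc_in F g v. *)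
Definition loc_in d (F : {set {perm 'I_d}}) (g : vert d -> vert d) (v : vert d) : Prop :=
  exists2 p, p \in F & forall c, g (step v c) = step (g v) (p c).

Definition in_U d (F' : {set {perm 'I_d}}) g := forall v, loc_in F' g v.
Definition in_G d (F : {set {perm 'I_d}}) g :=
  exists s : seq (vert d), forall v, v \notin s -> loc_in F g v.
Definition in_GFF' d (F F' : {set {perm 'I_d}}) g :=
  is_aut g /\ in_G F g /\ in_U F' g.

Inductive walk d : nat -> vert d -> vert d -> Prop :=
| walk0 u : walk 0 u u
| walkS n u v w : walk n u v -> adj v w -> walk n.+1 u w.

Definition is_dist d (n : nat) (u v : vert d) : Prop :=
  walk n u v /\ forall m, m < n -> ~ walk m u v.

Definition in_Gplus d (F F' : {set {perm 'I_d}}) g :=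
  in_GFF' F F' g /\ exists v n, is_dist n v (g v) /\ ~~ odd n.

Definition geodesic_line d (l : int -> vert d) : Prop :=
  forall i j : int, is_dist `|i - j|%N (l i) (l j).

Definition stabilizes d (g : vert d -> vert d) (l : int -> vert d) : Prop :=
  (forall i, exists j, g (l i) = l j) /\ (forall j, exists i, g (l i) = l j).

Definition two_transitive d (F' : {set {perm 'I_d}}) : Prop :=
  forall a b a' b' : 'I_d, a != b -> a' != b' ->
    exists2 x, x \in F' & x a = a' /\ x b = b'.

Definition preserves_orbits d (F F' : {set {perm 'I_d}}) : Prop :=
  forall x, x \in F' -> forall w : 'I_d, exists2 y, y \in F & y w = x w.

(* Main.v *)
Require Import Defs.
From HB Require Import structures.
From mathcomp Require Import all_boot all_order all_algebra all_fingroup.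
From mathcomp Require Import zify.
Set Implicit Arguments. Unset Strict Implicit. Unset Printing Implicit Defensive.
Import GRing.Theory Num.Theory.

Section Words.
Variable d : nat.
Implicit Types (w s t : seq 'I_d) (c x y : 'I_d).

Lemma reduced_rev w : reduced w -> reduced (rev w).
Proof.
rewrite /reduced rev_sorted; apply: sub_sorted => x y /=; by rewrite eq_sym.
Qed.

Lemma reduced_map (P : {perm 'I_d}) w : reduced w -> reduced (map P w).
Proof. rewrite /reduced sorted_map; apply: sub_sorted => x y /=; by rewrite (inj_eq perm_inj). Qed.

Lemma stepwK w c : reduced w -> stepw (stepw w c) c = w.
Proof.
case: w => [|x w] /=; first by rewrite eqxx.
case: (eqVneq x c) => [->|ne] /=; last by rewrite eqxx.
case: w => [|y w] /=; first by [].

rewrite /reduced /= => /andP [cy _]; by rewrite eq_sym (negbTE cy).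
Qed.

Lemma stepw_map (P : {perm 'I_d}) w c : stepw (map P w) (P c) = map P (stepw w c).
Proof. case: w => [|x w] //=; rewrite (inj_eq perm_inj); by case: eqP. Qed.

Fixpoint dd (s t : seq 'I_d) : nat :=
  match s, t with
  | x :: s', y :: t' => if x == y then dd s' t' else size s + size t
  | _, _ => size s + size t end.

Lemma dd_nilr s : dd s [::] = size s.
Proof. case: s => //= *; lia. Qed.

Lemma dd_refl s : dd s s = 0.
Proof. elim: s => //= x s IH; by rewrite eqxx. Qed.

Lemma dd_rcons s t c : (dd s (rcons t c) <= (dd s t).+1)%N /\ (dd s t <= (dd s (rcons t c)).+1)%N.
Proof.
elim: s t => [|x s IH] t; first by rewrite /= size_rcons; lia.
case: t => [|y t] /=.
  rewrite dd_nilr; case: eqP => _ /=; lia.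
case: eqP => _; first exact: IH.
rewrite /= size_rcons; lia.
Qed.

Lemma dd_step s (v : vert d) c :
  (dd s (rev (word (step v c))) <= (dd s (rev (word v))).+1)%N.
Proof.
rewrite /step /=; case: (word v) => [|x w] /=.
  by have [] := dd_rcons s [::] c.
case: eqP => [->|_].
  by have [] := dd_rcons s (rev w) c; rewrite rev_cons.
by rewrite rev_cons rev_cons; have [] := dd_rcons s (rcons (rev w) x) c.
Qed.

Lemma walk_dd n (u v : vert d) : walk n u v -> (dd (rev (word u)) (rev (word v)) <= n)%N.
Proof.
elim => [u0|m u0 v0 w0 _ IH [c ->]]; first by rewrite dd_refl.
apply: leq_trans (dd_step _ _ _) _; by [].
Qed.

Lemma adj_sym (u v : vert d) : adj u v -> adj v u.
Proof.
case=> c ->; exists c; apply: val_inj => /=; by rewrite stepwK // (valP u).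
Qed.

Lemma aut_of_U (S : {set {perm 'I_d}}) g : bijective g -> in_U S g -> is_aut g.
Proof.
move=> bg hU; split=> // u v; split.
- case=> c ->; have [P _ HP] := hU u; by exists (P c).
- case=> c' E; have [P _ HP] := hU u; exists (P^-1 c')%g.
  apply: (bij_inj bg); by rewrite HP permKV.
Qed.

Lemma loc_comp (F : {group {perm 'I_d}}) g h v :
  loc_in F h v -> loc_in F g (h v) -> loc_in F (g \o h) v.
Proof.
case=> Ph Phi Hh [Pg Pgi Hg]; exists (Ph * Pg)%g; first by rewrite groupM.
by move=> c; rewrite /= Hh Hg permM.
Qed.

Lemma GFF_comp (F F' : {group {perm 'I_d}}) g h :
  in_GFF' F F' g -> in_GFF' F F' h -> in_GFF' F F' (g \o h).
Proof.
move=> [[bg ag] [[sg Hg] Ug]] [[bh ah] [[sh Hh] Uh]].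
split; [split|split].
- exact: bij_comp.
- move=> u v; rewrite ah ag //.
- have [h' hK h'K] := bh.
  exists (sh ++ map h' sg) => v; rewrite mem_cat negb_or => /andP [nh ng].
  apply: loc_comp; first exact: Hh.
  apply: Hg; apply: contra ng => H; apply/mapP; exists (h v) => //; by rewrite hK.
- move=> v; apply: loc_comp; [exact: Uh | exact: Ug].
Qed.

Lemma GFF_id (F F' : {group {perm 'I_d}}) : in_GFF' F F' id.
Proof.
have L (S : {group {perm 'I_d}}) v : loc_in S id v by exists 1%g => // c; rewrite perm1.
split; [split|split].
- by exists id.
- by [].
- by exists [::] => v _; apply: L.
- by move=> v; apply: L.
Qed.

End Words.
Section Constr.
Variables (d : nat) (F F' : {group {perm 'I_d}}) (a b : 'I_d) (q p : {perm 'I_d}).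
Hypotheses (sFF' : F \subset F') (po : preserves_orbits F F') (qF : q \in F) (pF' : p \in F')
  (qa : q a = b) (nab : a != b) (pa : p a = b) (pb : p b = a).

Definition Q (c : 'I_d) : {perm 'I_d} :=
  if c == a then q else if c == b then q^-1%g else odflt 1%g [pick y in F | y c == p c].

Lemma QF c : Q c \in F.
Proof.
rewrite /Q; case: eqP => // _; case: eqP => _; first by rewrite groupV.
by case: pickP => [y /andP [] | _] //=; rewrite group1.
Qed.

Lemma Qc c : Q c c = p c.
Proof.
rewrite /Q; case: eqP => [->|_]; first by rewrite qa pa.
case: eqP => [->|_]; first by rewrite -{1}qa permK pb.
case: pickP => [y /andP [_ /eqP] //|none].
have [y yF yE] := po pF' c; by have := none y; rewrite yF yE eqxx.
Qed.

Lemma QF' c : Q c \in F'.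
Proof. exact: (subsetP sFF' _ (QF c)). Qed.

Definition rw (w : seq 'I_d) := map (Q (last a w)) w.
Definition rinvw (w : seq 'I_d) := map (Q (p^-1%g (last a w)))^-1%g w.

Lemma last_mapc (P : {perm 'I_d}) x w : last a (map P (x :: w)) = P (last a (x :: w)).
Proof. by rewrite /= last_map. Qed.

Lemma rwK : cancel rw rinvw.
Proof.
case=> [|x w] //; rewrite /rinvw /rw last_mapc.
set c := last a (x :: w); by rewrite Qc permK (mapK (permK _)).
Qed.

Lemma rinvwK : cancel rinvw rw.
Proof.
case=> [|x w] //; rewrite /rinvw /rw last_mapc.
set c := last a (x :: w).
have -> : ((Q (p^-1%g c))^-1)%g c = p^-1%g c.
  by apply: (@perm_inj _ (Q (p^-1%g c))); rewrite permKV Qc permKV.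
exact: (mapK (permKV _)).
Qed.

Definition rV (v : vert d) : vert d := @Vert d (rw (word v)) (reduced_map _ (valP v)).

Lemma last_stepw w c : w != [::] -> stepw w c = [::] \/ last a (stepw w c) = last a w.
Proof.
case: w => [|x w] // _ /=; case: eqP => _ /=; last by right.
case: w => [|y w]; by [left | right].
Qed.

Lemma rV_bij : bijective rV.
Proof.
have H w : reduced w -> reduced (rinvw w) by exact: reduced_map.
exists (fun v => @Vert d (rinvw (word v)) (H _ (valP v))) => v; apply: val_inj => /=.
  exact: rwK.
exact: rinvwK.
Qed.

Lemma rV_loc v : word v != [::] -> loc_in F rV v.
Proof.
move=> nv; exists (Q (last a (word v))); first exact: QF.
move=> c; apply: val_inj; rewrite /= /rw stepw_map.
by case: (last_stepw c nv) => ->.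
Qed.

Lemma rV_root v : loc_in F' rV v.
Proof.
case: (eqVneq (word v) [::]) => [E|nv]; last first.
  by have [P PF HP] := rV_loc nv; exists P => //; exact: (subsetP sFF').
exists p => // c; apply: val_inj; by rewrite /= /rw E /= Qc.
Qed.

Lemma rV_GFF : in_GFF' F F' rV.
Proof.
have U : in_U F' rV by move=> v; exact: rV_root.
split; first exact: aut_of_U rV_bij U.
split=> //.
exists [:: @Vert d [::] isT] => v; rewrite inE => nv; apply: rV_loc.
by apply: contra nv => /eqP E; apply/eqP/val_inj.
Qed.


Definition lamw (w : seq 'I_d) := rev (stepw (rev w) a).

Lemma lamw_cons x w : w != [::] -> lamw (x :: w) = x :: lamw w.
Proof.
rewrite /lamw rev_cons; case/lastP: w => [|w y] // _.
rewrite rev_rcons rcons_cons /=; case: eqP => _.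
  by rewrite rev_rcons.
by rewrite -!rcons_cons rev_rcons.
Qed.

Lemma lamw_step w c : lamw (stepw w c) = stepw (lamw w) c.
Proof.
case: w => [|x [|y w]].
- rewrite /lamw /=; case: (eqVneq c a) => [E|ne] //=.
- rewrite /lamw /=; case: (eqVneq x c) => [E|nxc] /=.
    subst x; case: (eqVneq c a) => [->|nca] //=; by rewrite eqxx.
  case: (eqVneq x a) => [E|nxa] //=.
  by rewrite (negbTE nxc).
- rewrite [lamw (x :: _)]lamw_cons //=; case: eqP => _ //=.
  by rewrite lamw_cons // lamw_cons.
Qed.

Lemma lamwK w : reduced w -> lamw (lamw w) = w.
Proof. by move=> rw0; rewrite /lamw revK stepwK ?revK //; exact: reduced_rev. Qed.

Lemma lamw_red w : reduced w -> reduced (lamw w).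
Proof. by move=> H; apply/reduced_rev/stepw_reduced/reduced_rev. Qed.

Definition lamV (v : vert d) : vert d := @Vert d (lamw (word v)) (lamw_red (valP v)).

Lemma lamV_GFF : in_GFF' F F' lamV.
Proof.
have L (S : {group {perm 'I_d}}) v : loc_in S lamV v.
  exists 1%g => // c; apply: val_inj; by rewrite /= lamw_step perm1.
have B : bijective lamV.
  by exists lamV => v; apply: val_inj; rewrite /= lamwK // (valP v).
split; first exact: (aut_of_U (S := F') B (L F')).
split; last by move=> v; apply: L.
by exists [::] => v _; apply: L.
Qed.


Local Open Scope ring_scope.

Definition col (i : nat) : 'I_d := (q ^+ i)%g a.
Lemma colS i : col i.+1 = q (col i).
Proof. by rewrite /col expgSr permM. Qed.
Lemma col_neq i : col i.+1 != col i.
Proof.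
rewrite /col expgS permM (inj_eq perm_inj) qa eq_sym; exact: nab.
Qed.
Lemma col0 : col 0 = a.
Proof. by rewrite /col expg0 perm1. Qed.

Lemma mkseq_front (T : Type) (f : nat -> T) k : mkseq f k.+1 = f 0%N :: mkseq (fun i => f i.+1) k.
Proof.
elim: k => [|k IH] //; by rewrite mkseqS IH mkseqS.
Qed.

Definition G k := mkseq col k.
Definition H k := map q (G k).

Lemma HE k : H k = mkseq (fun i => q (col i)) k.
Proof. by rewrite /H /G /mkseq -map_comp. Qed.

Lemma G_S k : G k.+1 = a :: H k.
Proof. by rewrite /G mkseq_front col0 HE; congr (_ :: _); apply: eq_mkseq => i; rewrite colS. Qed.

Lemma H_S k : H k.+1 = b :: map q (H k).
Proof. by rewrite {1}/H G_S /= qa. Qed.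

Lemma sorted_mkseq (f : nat -> 'I_d) k : (forall i, f i.+1 != f i) -> reduced (mkseq f k).
Proof.
elim: k f => [|k IH] f Hf //.
rewrite mkseq_front; case: k IH => [|k] IH //.
have := IH (fun i => f i.+1) (fun i => Hf i.+1).
rewrite mkseq_front /reduced /= => ->; by rewrite andbT eq_sym Hf.
Qed.

Lemma G_red k : reduced (G k).
Proof. apply: sorted_mkseq => i; exact: col_neq. Qed.

Definition lw (n : int) : seq 'I_d := if n is Posz k then rev (G k) else rev (H `|n|%N).

Lemma lw_red n : reduced (lw n).
Proof. case: n => k /=; apply: reduced_rev; [exact: G_red | exact/reduced_map/G_red]. Qed.

Definition lV (n : int) : vert d := @Vert d (lw n) (lw_red n).

Lemma lw_pos (k : nat) : lw k%:Z = rev (G k).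
Proof. by []. Qed.
Lemma lw_neg (k : nat) : lw (- k%:Z) = rev (H k).
Proof. by case: k. Qed.

Lemma int_cases (n : int) : exists k : nat, n = k%:Z \/ n = - k%:Z.
Proof. case: n => k; [exists k; left | exists k.+1; right; rewrite NegzE] => //. Qed.

Lemma adj_line n : adj (lV n) (lV (n + 1)).
Proof.
have [k [->|->]] := int_cases n.
  have -> : k%:Z + 1 = (k.+1)%:Z by lia.
  apply: adj_sym; exists (col k); apply: val_inj.
  by rewrite /= /G mkseqS rev_rcons /= eqxx.
case: k => [|k]; first by rewrite oppr0 add0r; exists (col 0); apply: val_inj.
have -> : - (k.+1)%:Z + 1 = - k%:Z by lia.
exists (q (col k)); apply: val_inj.
by rewrite /= !lw_neg /H /G mkseqS map_rcons rev_rcons /= eqxx.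
Qed.


Lemma dd_sym (s t : seq 'I_d) : dd s t = dd t s.
Proof.
elim: s t => [|x s IH] [|y t] //=; try by rewrite addnC.
rewrite [y == x]eq_sym; case: eqP => _; [exact: IH | by rewrite addnC].
Qed.

Lemma dd_mkseq (f : nat -> 'I_d) i j : dd (mkseq f i) (mkseq f j) = ((i - j) + (j - i))%N.
Proof.
elim: i j f => [|i IH] j f; first by rewrite /= size_mkseq; lia.
case: j => [|j]; first by rewrite dd_nilr size_mkseq; lia.
by rewrite !mkseq_front /= eqxx IH.
Qed.

Lemma size_H k : size (H k) = k.
Proof. by rewrite size_map size_mkseq. Qed.

Lemma dd_GH i j : dd (G i) (H j) = (i + j)%N.
Proof.
case: i => [|i]; first by rewrite /= size_H.
case: j => [|j]; first by rewrite dd_nilr /G size_mkseq addn0.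
rewrite G_S H_S /= (negbTE nab) /= size_map !size_H; lia.
Qed.

Lemma dd_line i j : dd (rev (lw i)) (rev (lw j)) = `|i - j|%N.
Proof.
have [k [->|->]] := int_cases i; have [k' [->|->]] := int_cases j;
  rewrite ?lw_pos ?lw_neg !revK.
- rewrite dd_mkseq; lia.
- rewrite dd_GH; lia.
- rewrite dd_sym dd_GH; lia.
- rewrite !HE dd_mkseq; lia.
Qed.

Lemma walk_up i (n : nat) : walk n (lV i) (lV (i + n%:Z)).
Proof.
elim: n => [|n IH]; first by rewrite addr0; constructor.
apply: walkS IH _; have -> : i + (n.+1)%:Z = i + n%:Z + 1 by lia.
exact: adj_line.
Qed.

Lemma walk_down i (n : nat) : walk n (lV i) (lV (i - n%:Z)).
Proof.
elim: n => [|n IH]; first by rewrite subr0; constructor.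
apply: walkS IH _; apply: adj_sym.
have -> : i - n%:Z = i - (n.+1)%:Z + 1 by lia.
exact: adj_line.
Qed.

Lemma geo : geodesic_line lV.
Proof.
move=> i j; split.
  case: (lerP i j) => hij.
    have -> : lV j = lV (i + (`|i - j|%N)%:Z) by congr lV; lia.
    exact: walk_up.
  have -> : lV j = lV (i - (`|i - j|%N)%:Z) by congr lV; lia.
  exact: walk_down.
move=> m hm /walk_dd; rewrite /= dd_line; lia.
Qed.


Lemma rV_line n : rV (lV n) = lV (- n).
Proof.
apply: val_inj; rewrite /= /rw.
have [k [->|->]] := int_cases n; case: k => [|k].
- by [].
- have -> : last a (lw (k.+1)%:Z) = a by rewrite lw_pos G_S rev_cons last_rcons.
  by rewrite /Q eqxx map_rev lw_neg.
- by [].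
- have -> : last a (lw (- (k.+1)%:Z)) = b by rewrite lw_neg H_S rev_cons last_rcons.
  rewrite /Q eq_sym (negbTE nab) eqxx opprK lw_pos lw_neg map_rev /H.
  by rewrite (mapK (permK q)).
Qed.

Lemma lamV_line n : lamV (lV n) = lV (1 - n).
Proof.
apply: val_inj; rewrite /= /lamw.
have [k [->|->]] := int_cases n; case: k => [|k].
- by rewrite subr0 (lw_pos 1) G_S.
- have -> : 1 - (k.+1)%:Z = - k%:Z by lia.
  by rewrite lw_pos lw_neg revK G_S /= eqxx.
- by rewrite oppr0 subr0 (lw_pos 1) G_S.
- have -> : 1 - - (k.+1)%:Z = (k.+2)%:Z by lia.
  by rewrite lw_pos lw_neg revK H_S /= eq_sym (negbTE nab) -H_S -G_S.
Qed.

Definition tau := lamV \o rV.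
Lemma tau_line n : tau (lV n) = lV (n + 1).
Proof. rewrite /tau /= rV_line lamV_line; congr lV; lia. Qed.

Lemma tau_GFF : in_GFF' F F' tau.
Proof. exact: GFF_comp lamV_GFF rV_GFF. Qed.

Definition P (n : nat) := iter n (fun f => tau \o f) id.
Lemma P_line n k : P n (lV k) = lV (k + n%:Z).
Proof.
elim: n => [|n IH]; first by rewrite addr0.
rewrite /P iterS /= -/(P n) IH tau_line; congr lV; lia.
Qed.
Lemma P_GFF n : in_GFF' F F' (P n).
Proof.
elim: n => [|n IH]; first exact: GFF_id.
rewrite /P iterS -/(P n); exact: GFF_comp tau_GFF IH.
Qed.

Definition aff (g : vert d -> vert d) (e m : int) := forall k, g (lV k) = lV (e * k + m).

Lemma aff_ex (e m : int) : e = 1 \/ e = -1 -> exists g, in_GFF' F F' g /\ aff g e m.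
Proof.
have Hr := rV_GFF.
case=> ->; case: (lerP 0 m) => hm.
- exists (P `|m|%N); split; first exact: P_GFF.
  move=> k; rewrite P_line; congr lV; lia.
- exists (rV \o P `|m|%N \o rV); split.
    exact: GFF_comp (GFF_comp Hr (P_GFF _)) Hr.
  move=> k; rewrite /= rV_line P_line rV_line; congr lV; lia.
- exists (P `|m|%N \o rV); split; first exact: GFF_comp (P_GFF _) Hr.
  move=> k; rewrite /= rV_line P_line; congr lV; lia.
- exists (rV \o P `|m|%N); split; first exact: GFF_comp Hr (P_GFF _).
  move=> k; rewrite /= P_line rV_line; congr lV; lia.
Qed.


Lemma int_par (x : int) : exists z : int, x = 2 * z \/ x = 2 * z + 1.
Proof.
have E := divz_eq x 2.
have h1 : 0 <= (x %% 2)%Z by apply: modz_ge0.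
have h2 : (x %% 2)%Z < 2 by apply: ltz_pmod.
exists (x %/ 2)%Z; lia.
Qed.

Lemma Gplus_of g e m z : in_GFF' F F' g -> aff g e m -> m = 2 * z -> in_Gplus F F' g.
Proof.
move=> Hg Ha Em; split=> //; exists (lV 0), `|0 - m|%N; split.
  rewrite Ha (_ : e * 0 + m = m); [exact: geo | by rewrite mulr0 add0r].
have -> : `|0 - m|%N = (2 * `|z|%N)%N by lia.
by rewrite oddM.
Qed.

Lemma stab_of g e m : e = 1 \/ e = -1 -> aff g e m -> stabilizes g lV.
Proof.
move=> He Ha; split=> [i|j]; first by exists (e * i + m).
exists (e * (j - m)); rewrite Ha; congr lV; case: He => ->; lia.
Qed.

Lemma main_sec : exists l : int -> vert d,
    geodesic_line l /\
    (exists t, in_Gplus F F' t /\ stabilizes t l /\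
       ((forall i, t (l i) = l (i + 2)) \/ (forall i, t (l i) = l (i - 2)))) /\
    (exists r (k : int), in_Gplus F F' r /\ stabilizes r l /\
       forall i, r (l (k + i)) = l (k - i)) /\
    (forall i j : int, exists g, in_Gplus F F' g /\ stabilizes g l /\
       ((g (l i) = l j /\ g (l (i + 1)) = l (j + 1)) \/
        (g (l i) = l (j + 1) /\ g (l (i + 1)) = l j))).
Proof.
have e1 : (1 : int) = 1 \/ (1 : int) = -1 by left.
have em1 : (-1 : int) = 1 \/ (-1 : int) = -1 by right.
exists lV; split; first exact: geo.
split.
  have [t [Ht Hat]] := aff_ex 2 e1.
  exists t; split; first by apply: (Gplus_of (z := 1) Ht Hat).
  split; first exact: stab_of e1 Hat.
  by left => i; rewrite Hat mul1r.
have Har : aff rV (-1) 0 by move=> k; rewrite rV_line; congr lV; lia.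
split.
  exists rV, 0; split; first by apply: (Gplus_of (z := 0) rV_GFF Har).
  split; first exact: stab_of em1 Har.
  by move=> i; rewrite rV_line; congr lV; lia.
move=> i j; have [z [E|E]] := int_par (j - i).
  have [g [Hg Hag]] := aff_ex (j - i) e1.
  exists g; split; first exact: Gplus_of Hg Hag E.
  split; first exact: stab_of e1 Hag.
  by left; rewrite !Hag; split; congr lV; lia.
have [g [Hg Hag]] := aff_ex (i + j + 1) em1.
exists g; split; first by apply: (Gplus_of (z := i + z + 1) Hg Hag); lia.
split; first exact: stab_of em1 Hag.
by right; rewrite !Hag; split; congr lV; lia.
Qed.

End Constr.

Unset Implicit Arguments.
Local Open Scope ring_scope.

Theorem mainTheorem8 (d : nat) (F F' : {group {perm 'I_d}}) :
  (3 <= d)%N ->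
  F \subset F' ->
  preserves_orbits F F' ->
  F :!=: 1%g ->
  two_transitive F' ->
  exists l : int -> vert d,
    geodesic_line l /\
    (exists t, in_Gplus F F' t /\ stabilizes t l /\
       ((forall i, t (l i) = l (i + 2)) \/ (forall i, t (l i) = l (i - 2)))) /\
    (exists r (k : int), in_Gplus F F' r /\ stabilizes r l /\
       forall i, r (l (k + i)) = l (k - i)) /\
    (forall i j : int, exists g, in_Gplus F F' g /\ stabilizes g l /\
       ((g (l i) = l j /\ g (l (i + 1)) = l (j + 1)) \/
        (g (l i) = l (j + 1) /\ g (l (i + 1)) = l j))).
Proof.
move=> _ sFF' po nF tt.
have [q qF nq] := trivgPn _ nF.
have [a Ha] : exists a, q a != a.
  case: (pickP (fun a => q a != a)) => [a Ha|none]; first by exists a.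
  exfalso; move/negP: nq; apply; apply/eqP/permP => x; rewrite perm1.
  by have := none x; move/negbFE/eqP.
have nab : a != q a by rewrite eq_sym.
have [p pF' [pa pb]] := tt a (q a) (q a) a nab Ha.
exact: (main_sec sFF' po qF pF' erefl nab pa pb).
Qed.
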